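(* Let $\{x_k\}$ be generated by the Subgradient-InexP method with the exogenous stepsize rule, under the standing assumptions. Then $\liminf_k f(x_k)=f^*$ (where $f^*=\inf_{x\in C}f(x)$, possibly $-\infty$). In addition, if $\Omega^*\neq\varnothing$, then $\{x_k\}$ converges to a point $x_*\in\Omega^*$.
   Context: Problem: minimize a convex $f:\mathbb{R}^n\to\mathbb{R}$ over a nonempty closed convex $C\subset\mathbb{R}^n$; $f^*:=\inf_{x\in C}f(x)$ and $\Omega^*$ is the (possibly empty) set of minimizers of $f$ on $C$. For $\epsilon\ge0$, $\partial_\epsilon f(x):=\{s: f(y)\ge f(x)+\langle s,y-x\rangle-\epsilon\ \forall y\}$. Relative error tolerance function: any $\varphi_{\gamma,\theta,\lambda}:(\mathbb{R}^n)^3\to[0,\infty)$ with $\varphi_{\gamma,\theta,\lambda}(u,v,w)\le\gamma\|v-u\|^2+\theta\|w-v\|^2+\lambda\|w-u\|^2$; for $u\in C$, $\mathcal{P}_C(\varphi_{\gamma,\theta,\lambda},u,v):=\{w\in C:\langle v-w,z-w\rangle\le\varphi_{\gamma,\theta,\lambda}(u,v,w)\ \forall z\in C\}$. Subgradient-InexP method: $x_0\in C$; at iteration $k$, if $0\in\partial f(x_k)$ stop; otherwise choose nonzero $s_k\in\partial_{\epsilon_k}f(x_k)$, stepsize $t_k>0$, and $x_{k+1}\in\mathcal{P}_C(\varphi_{\gamma_k,\theta_k,\lambda_k},x_k,x_k-t_ks_k)$. Standing assumptions: $\gamma_k\in[0,\bar\gamma)$, $\theta_k\in[0,\bar\theta)$,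 $\lambda_k\in[0,\bar\lambda)$ with $\bar\gamma\ge0$, $\bar\theta,\bar\lambda\in[0,1/2)$; the sequence is infinite. Exogenous stepsize rule: $\mu\ge0$; $\{\alpha_k\}$, $\{\epsilon_k\}$ nonnegative, $\{\epsilon_k\}$ nonincreasing, $\sum_k\alpha_k=+\infty$, $\sum_k\alpha_k^2<+\infty$, $\epsilon_k\le\mu\alpha_k$; $t_k:=\alpha_k/\eta_k$, $\eta_k:=\max\{1,\|s_k\|\}$. *)

(* Defs.v *)
From mathcomp Require Import all_boot all_order all_algebra.
From mathcomp Require Import all_classical all_reals all_analysis.
Set Implicit Arguments. Unset Strict Implicit. Unset Printing Implicit Defensive.
Import Order.TTheory GRing.Theory Num.Theory.
Import numFieldNormedType.Exports.
Local Open Scope classical_set_scope.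
Local Open Scope ring_scope.

Section Defs.
Context {R : realType} {n : nat}.
Notation vec := 'rV[R]_n.

Definition dotp (u v : vec) : R := \sum_(i < n) u ord0 i * v ord0 i.
Definition enorm (u : vec) : R := Num.sqrt (dotp u u).

Definition convex_fun (f : vec -> R) : Prop :=
  forall (x y : vec) (t : R), 0 <= t -> t <= 1 ->
    f (t *: x + (1 - t) *: y) <= t * f x + (1 - t) * f y.

Definition cvx_set (C : set vec) : Prop :=
  forall (x y : vec) (t : R), C x -> C y -> 0 <= t -> t <= 1 ->
    C (t *: x + (1 - t) *: y).

Definition eps_subdiff (f : vec -> R) (eps : R) (x : vec) : set vec :=
  [set s | forall y : vec, f y >= f x + dotp s (y - x) - eps].

Definition rel_err_tol (gam th lam : R) (phi : vec -> vec -> vec -> R) : Prop :=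
  forall u v w : vec, 0 <= phi u v w /\
    phi u v w <= gam * dotp (v - u) (v - u) + th * dotp (w - v) (w - v)
                 + lam * dotp (w - u) (w - u).

Definition inexact_proj (C : set vec) (phi : vec -> vec -> vec -> R) (u v : vec)
  : set vec :=
  [set w | C w /\ forall z : vec, C z -> dotp (v - w) (z - w) <= phi u v w].

Definition opt_val (f : vec -> R) (C : set vec) : \bar R :=
  ereal_inf [set (f x)%:E | x in C].

Definition minimizers (f : vec -> R) (C : set vec) : set vec :=
  [set x | C x /\ forall y, C y -> f x <= f y].

End Defs.

(* Main.v *)
Require Import Defs.
From mathcomp Require Import all_boot all_order all_algebra.
From mathcomp Require Import all_classical all_reals all_analysis.
From mathcomp Require Import ring lra.
Import Order.TTheory GRing.Theory Num.Theory.
Import numFieldNormedType.Exports.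
Local Open Scope classical_set_scope.
Local Open Scope ring_scope.


Section Dot.
Context {R : realType} {n : nat}.
Notation vec := 'rV[R]_n.

Lemma dotpC (u v : vec) : dotp u v = dotp v u.
Proof. by apply: eq_bigr => i _; rewrite mulrC. Qed.

Lemma dotpDl (u w v : vec) : dotp (u + w) v = dotp u v + dotp w v.
Proof. rewrite /dotp -big_split /=; apply: eq_bigr => i _; rewrite !mxE; ring. Qed.

Lemma dotpZl (c : R) (u v : vec) : dotp (c *: u) v = c * dotp u v.
Proof. rewrite /dotp mulr_sumr; apply: eq_bigr => i _; rewrite !mxE; ring. Qed.

Lemma dotpNl (u v : vec) : dotp (- u) v = - dotp u v.
Proof. rewrite -scaleN1r dotpZl; ring. Qed.

Lemma dotpBl (u w v : vec) : dotp (u - w) v = dotp u v - dotp w v.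
Proof. by rewrite dotpDl dotpNl. Qed.

Lemma dotpDr (v u w : vec) : dotp v (u + w) = dotp v u + dotp v w.
Proof. by rewrite dotpC dotpDl !(dotpC v). Qed.
Lemma dotpBr (v u w : vec) : dotp v (u - w) = dotp v u - dotp v w.
Proof. by rewrite dotpC dotpBl !(dotpC v). Qed.
Lemma dotpZr (c : R) (u v : vec) : dotp u (c *: v) = c * dotp u v.
Proof. by rewrite dotpC dotpZl dotpC. Qed.
Lemma dotpNr (u v : vec) : dotp u (- v) = - dotp u v.
Proof. by rewrite dotpC dotpNl dotpC. Qed.

Lemma dotp_ge0 (u : vec) : 0 <= dotp u u.
Proof. by apply: sumr_ge0 => i _; rewrite -expr2 sqr_ge0. Qed.

Lemma coord_le (u : vec) (i : 'I_n) : u ord0 i ^+ 2 <= dotp u u.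
Proof.
rewrite /dotp (bigD1 i) //= -expr2 lerDl; apply: sumr_ge0 => j _.
by rewrite -expr2 sqr_ge0.
Qed.

Lemma dotp_le_coord (u : vec) (e : R) : (forall i, `|u ord0 i| <= e) ->
  dotp u u <= n%:R * e ^+ 2.
Proof.
move=> h; rewrite /dotp.
have -> : n%:R * e ^+ 2 = \sum_(i < n) e ^+ 2 by rewrite sumr_const card_ord mulr_natl.
apply: ler_sum => i _; have := h i; rewrite ler_norml => /andP[a b]; nra.
Qed.

Lemma scal1 (A Bq P th la g thb lb gb : R) :
  0 <= A -> 0 <= Bq -> 0 <= th -> th <= thb -> 0 <= la -> la <= lb ->
  0 <= g -> g <= gb -> thb < 1/2 -> lb < 1/2 ->
  0 <= (1 - thb - lb) ^+ 2 * A - 2 * (1 - thb - lb) * P + Bq ->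
  A - P <= g * Bq + th * A + la * (A - 2 * P + Bq) ->
  A <= (((1 - thb - lb) ^-1) ^+ 2 + 2 * (gb + lb) / (1 - thb - lb)) * Bq.
Proof.
move=> A0 B0 t0 tt l0 ll g0 gg tb lbb cs h.
set c := 1 - thb - lb.
have c0 : 0 < c by rewrite /c; lra.
have hP : (1 - 2 * la) * P <= (c * A + Bq / c) / 2.
  have h2 : 2 * P <= c * A + Bq / c.
    rewrite -(@ler_pM2l _ c) //.
    have -> : c * (c * A + Bq / c) = c ^+ 2 * A + Bq by field; rewrite gt_eqF.
    have cs' : 0 <= c ^+ 2 * A - 2 * c * P + Bq := cs.
    lra.
  case: (lerP 0 P) => hp.
    have : (1 - 2 * la) * P <= P.
      rewrite ler_piMl //; lra.
    lra.
  have : (1 - 2 * la) * P <= 0.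
    have : 0 <= 1 - 2 * la by lra.
    nra.
  have := mulr_ge0 (ltW c0) A0; have := divr_ge0 B0 (ltW c0).
  lra.
have h3 : c * A <= (1 - th - la) * A by rewrite ler_wpM2r //; rewrite /c; lra.
have h4 : (1 - th - la) * A <= (1 - 2 * la) * P + (gb + lb) * Bq.
  have : g * Bq + la * Bq <= (gb + lb) * Bq by rewrite -mulrDl ler_wpM2r //; lra.
  lra.
have h5 : c * A <= Bq / c + 2 * (gb + lb) * Bq by lra.
rewrite -(@ler_pM2l _ c) //.
have -> : c * ((c^-1 ^+ 2 + 2 * (gb + lb) / c) * Bq) = Bq / c + 2 * (gb + lb) * Bq.
  by field; rewrite gt_eqF.
done.
Qed.

End Dot.


Section Step.
Context {R : realType} {n : nat}.
Notation vec := 'rV[R]_n.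
Notation N u := (dotp u u).

Definition Kc (gb thb lb : R) :=
  (((1 - thb - lb) ^-1) ^+ 2 + 2 * (gb + lb) / (1 - thb - lb)).
Definition Mc (gb thb lb : R) :=
  gb + lb * (2 * Kc gb thb lb + 2) + thb * Kc gb thb lb.

Ltac dexp := rewrite ?(dotpDl,dotpDr,dotpBl,dotpBr,dotpNl,dotpNr,dotpZl,dotpZr).

Lemma step_bound (C : set vec) (ph : R) (u v w z : vec) (g th la gb thb lb : R) :
  C u -> C z -> (forall z, C z -> dotp (v - w) (z - w) <= ph) ->
  ph <= g * N (v - u) + th * N (w - v) + la * N (w - u) ->
  0 <= th -> th <= thb -> 0 <= la -> la <= lb ->
  0 <= g -> g <= gb -> thb < 1/2 -> lb < 1/2 ->
  N (w - z) <= N (v - z) + 2 * Mc gb thb lb * N (v - u).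
Proof.
move=> Cu Cz hp hph t0 tt l0 ll g0 gg tb lbb.
rewrite /Mc; set K := Kc gb thb lb.
have F1 := hp z Cz.
have F2 := hp u Cu.
set A := N (w - v); set Bq := N (u - v); set P := dotp (w - v) (u - v).
have A0 : 0 <= A := dotp_ge0 _.
have B0 : 0 <= Bq := dotp_ge0 _.
have E1 : N (v - u) = Bq.
  rewrite /Bq; dexp; rewrite (dotpC v u); ring.
have E2 : dotp (v - w) (u - w) = A - P.
  rewrite /A /P; dexp; rewrite (dotpC v u) (dotpC w u) (dotpC v w); ring.
have E3 : N (w - u) = A - 2 * P + Bq.
  rewrite /A /P /Bq; dexp; rewrite (dotpC v u) (dotpC w u) (dotpC v w); ring.
have E4 : N (w - z) = N (v - z) - A + 2 * dotp (v - w) (z - w).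
  rewrite /A; dexp.
  rewrite (dotpC v w) (dotpC z w) (dotpC z v); ring.
have cs : 0 <= (1 - thb - lb) ^+ 2 * A - 2 * (1 - thb - lb) * P + Bq.
  have := dotp_ge0 ((1 - thb - lb) *: (w - v) - (u - v)).
  set c := 1 - thb - lb.
  have -> : N (c *: (w - v) - (u - v)) = c ^+ 2 * A - 2 * c * P + Bq.
    rewrite /A /P /Bq; dexp; rewrite (dotpC v u) (dotpC w u) (dotpC v w); ring.
  done.
have cs1 : 0 <= A + 2 * P + Bq.
  have := dotp_ge0 ((w - v) + (u - v)).
  have -> : N ((w - v) + (u - v)) = A + 2 * P + Bq.
    rewrite /A /P /Bq; dexp; rewrite (dotpC v u) (dotpC w u) (dotpC v w); ring.
  done.
have hA : A <= K * Bq.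
  have := (@scal1 R A Bq P th la g thb lb gb A0 B0 t0 tt l0 ll g0 gg tb lbb cs); rewrite /K /Kc; apply.
  rewrite -E2 -E3 -E1 -/A; apply: le_trans F2 hph.
have K0 : 0 <= K.
  rewrite /K /Kc; apply: addr_ge0; first exact: sqr_ge0.
  apply: divr_ge0; lra.
have G1 : g * N (v - u) <= gb * Bq by rewrite E1 ler_wpM2r.
have G2 : th * A <= thb * (K * Bq).
  apply: ler_pM => //.
have G3 : la * N (w - u) <= lb * ((2 * K + 2) * Bq).
  apply: ler_pM => //; first exact: dotp_ge0.
  rewrite E3; lra.
rewrite E4 E1.
have : 0 <= dotp (v - w) (v - w) by exact: dotp_ge0.
move=> _.
have : ph <= gb * Bq + thb * (K * Bq) + lb * ((2 * K + 2) * Bq).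
  apply: le_trans hph _; rewrite -/A; lra.
lra.
Qed.

End Step.


Section Box.
Context {R : realType} {n : nat}.
Notation vec := 'rV[R]_n.
Variables (f : vec -> R) (c : vec) (r : R).
Hypotheses (fc : convex_fun f) (r0 : 0 < r).

Definition wv (sg : {ffun 'I_n -> bool}) (m : nat) (y : vec) : vec :=
  \row_i (if (i < m)%N then c ord0 i + (if sg i then r else - r) else y ord0 i).

Definition setc (y : vec) (j : 'I_n) (a : R) : vec :=
  \row_i (if i == j then a else y ord0 i).

Lemma box_claim m : forall y : vec, (forall i : 'I_n, (i < m)%N -> `|y ord0 i - c ord0 i| <= r) ->
  exists sg, f y <= f (wv sg m y).
Proof.
have r0' := r0.
elim: m => [|m IH] y hy.
  exists [ffun => true].
  suff -> : wv [ffun => true] 0 y = y by [].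
  by apply/rowP => i; rewrite mxE.
case: (ltnP m n) => hm; last first.
  have [sg hs] := IH y (fun i hi => hy i (ltnW hi)).
  exists sg; suff <- : wv sg m y = wv sg m.+1 y by [].
  apply/rowP => i; rewrite !mxE.
  have hi : (i < m)%N by apply: leq_trans (ltn_ord i) hm.
  by rewrite hi ltnS ltnW.
set j : 'I_n := Ordinal hm.
have hyj := hy j (ltnSn m).
move: hyj; rewrite ler_norml => /andP [hj1 hj2].
set yp := setc y j (c ord0 j + r).
set ym := setc y j (c ord0 j - r).
set lam := (y ord0 j - c ord0 j + r) / (2 * r).
have l0 : 0 <= lam by apply: divr_ge0; lra.
have l1 : lam <= 1 by rewrite ler_pdivrMr; lra.
have ey : y = lam *: yp + (1 - lam) *: ym.
  apply/rowP => i; rewrite !mxE.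
  case: eqP => [->|_]; last by ring.
  rewrite /lam; field; lra.
have hc := fc yp ym lam l0 l1.
rewrite -ey in hc.
have hyp : forall i : 'I_n, (i < m)%N -> `|yp ord0 i - c ord0 i| <= r.
  move=> i hi; rewrite /yp mxE.
  have -> : (i == j) = false by apply/eqP => e; move: hi; rewrite e /= ltnn.
  exact: hy (ltnW hi).
have hym : forall i : 'I_n, (i < m)%N -> `|ym ord0 i - c ord0 i| <= r.
  move=> i hi; rewrite /ym mxE.
  have -> : (i == j) = false by apply/eqP => e; move: hi; rewrite e /= ltnn.
  exact: hy (ltnW hi).
have [sp hsp] := IH yp hyp.
have [sm hsm] := IH ym hym.
have key : forall (b : bool) (sg : {ffun 'I_n -> bool}),
  wv [ffun i => if i == j then b else sg i] m.+1 y =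
  wv sg m (setc y j (c ord0 j + (if b then r else - r))).
  move=> b sg; apply/rowP => i; rewrite !mxE ffunE.
  case: (eqVneq i j) => [->|ne] /=.
    by rewrite ltnSn ltnn; case: b.
  rewrite ltnS leq_eqVlt.
  have -> : (nat_of_ord i == m) = false.
    by apply/eqP => e; move: ne; rewrite (_ : i = j) ?eqxx //; apply: val_inj.
  done.
case: (lerP (f ym) (f yp)) => hcmp.
  exists [ffun i => if i == j then true else sp i].
  rewrite key /=; apply: le_trans hc _.
  have : f yp <= f (wv sp m yp) := hsp.
  rewrite /yp; nra.
exists [ffun i => if i == j then false else sm i].
rewrite key /=.
apply: le_trans hc _.
have : f ym <= f (wv sm m ym) := hsm.
rewrite /ym; nra.
Qed.

Lemma box_bound : exists B, forall y : vec,
  (forall i, `|y ord0 i - c ord0 i| <= r) -> f y <= B.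
Proof.
exists (\sum_(sg : {ffun 'I_n -> bool}) `|f (wv sg n c)|).
move=> y hy.
have [sg hs] := box_claim n y (fun i _ => hy i).
have e : wv sg n y = wv sg n c.
  by apply/rowP => i; rewrite !mxE ltn_ord.
rewrite e in hs.
apply: (le_trans hs); apply: (le_trans (ler_norm _)).
rewrite (bigD1 sg) //= lerDl; apply: sumr_ge0 => *; exact: normr_ge0.
Qed.

End Box.


Lemma t_bounds {R : realType} (a Ns : R) : 0 <= a -> 0 <= Ns ->
  a / Num.max 1 (Num.sqrt Ns) <= a /\
  (a / Num.max 1 (Num.sqrt Ns)) ^+ 2 * Ns <= a ^+ 2.
Proof.
move=> a0 N0.
set m := Num.max 1 (Num.sqrt Ns).
have m1 : 1 <= m by rewrite /m le_max lexx.
have ms : Num.sqrt Ns <= m by rewrite /m le_max lexx orbT.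
have m0 : 0 < m by lra.
have s0 : 0 <= Num.sqrt Ns := sqrtr_ge0 _.
have Nm : Ns <= m ^+ 2.
  rewrite -[Ns](sqr_sqrtr N0); nra.
split.
  rewrite ler_pdivrMr //; nra.
have -> : (a / m) ^+ 2 * Ns = a ^+ 2 * (Ns / m ^+ 2) by field; rewrite gt_eqF.
have : Ns / m ^+ 2 <= 1.
  rewrite ler_pdivrMr ?exprn_gt0 //; lra.
have := sqr_ge0 a; nra.
Qed.

Section Iter.
Context {R : realType} {n : nat}.
Notation vec := 'rV[R]_n.
Notation N u := (dotp u u).
Variables (f : vec -> R) (C : set vec) (x s : nat -> vec)
  (t eps alpha gam th lam : nat -> R)
  (phi : nat -> vec -> vec -> vec -> R) (gbar thbar lbar mu : R).
Hypotheses (g0 : 0 <= gbar) (tb0 : 0 <= thbar) (tb : thbar < 1/2)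
  (lb0 : 0 <= lbar) (lb : lbar < 1/2)
  (hg : forall k, 0 <= gam k /\ gam k < gbar)
  (hth : forall k, 0 <= th k /\ th k < thbar)
  (hl : forall k, 0 <= lam k /\ lam k < lbar)
  (hphi : forall k, rel_err_tol (gam k) (th k) (lam k) (phi k))
  (mu0 : 0 <= mu) (al0 : forall k, 0 <= alpha k) (ep0 : forall k, 0 <= eps k)
  (epmu : forall k, eps k <= mu * alpha k)
  (ht : forall k, t k = alpha k / Num.max 1 (enorm (s k)))
  (Cx0 : C (x 0%N))
  (hs : forall k, s k != 0 /\ eps_subdiff f (eps k) (x k) (s k))
  (hproj : forall k, inexact_proj C (phi k) (x k) (x k - t k *: s k) (x k.+1)).

Ltac cph := have g0' := g0; have tb0' := tb0; have tb' := tb; have lb0' := lb0;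
  have lb' := lb; have mu0' := mu0.

Lemma Cx k : C (x k).
Proof. by case: k => [|k] //; case: (hproj k). Qed.

Definition Mf := 2 * Mc gbar thbar lbar + 1 + 2 * mu.

Lemma Mc_ge0 : 0 <= Mc gbar thbar lbar.
Proof.
cph.
have K0 : 0 <= Kc gbar thbar lbar.
  rewrite /Kc; apply: addr_ge0; first exact: sqr_ge0.
  apply: divr_ge0; lra.
rewrite /Mc; have h1 := mulr_ge0 lb0 K0; have h2 := mulr_ge0 tb0 K0.
set K := Kc _ _ _ in h1 h2 *. nra.
Qed.

Lemma Mf_ge0 : 0 <= Mf.
Proof. cph; have := Mc_ge0; rewrite /Mf; lra. Qed.

Lemma t_le k : t k <= alpha k /\ t k ^+ 2 * N (s k) <= alpha k ^+ 2.
Proof. rewrite ht /enorm; exact: t_bounds (al0 k) (dotp_ge0 _). Qed.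

Lemma t_ge0 k : 0 <= t k.
Proof.
rewrite ht; apply: divr_ge0 => //.
have h : (1:R) <= Num.max 1 (enorm (s k)) by rewrite le_max lexx.
lra.
Qed.

Ltac dexp := rewrite ?(dotpDl,dotpDr,dotpBl,dotpBr,dotpNl,dotpNr,dotpZl,dotpZr).

Lemma fejer z k : C z ->
  N (x k.+1 - z) <= N (x k - z) + 2 * t k * (f z - f (x k)) + Mf * alpha k ^+ 2.
Proof.
move=> Cz; cph.
case: (hproj k) => _ hp.
have [hph0 hph] := hphi k (x k) (x k - t k *: s k) (x k.+1).
have [g1 g2] := hg k; have [t1 t2] := hth k; have [l1 l2] := hl k.
have S := @step_bound R n C _ _ _ _ _ _ _ _ gbar thbar lbar (Cx k) Cz hp hph t1 (ltW t2) l1 (ltW l2) g1 (ltW g2) tb lb.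
have E1 : N (x k - t k *: s k - x k) = t k ^+ 2 * N (s k).
  dexp; rewrite (dotpC (s k) (x k)); ring.
have E2 : N (x k - t k *: s k - z) =
   N (x k - z) - 2 * t k * dotp (s k) (x k - z) + t k ^+ 2 * N (s k).
  dexp; rewrite (dotpC (s k) (x k)) (dotpC z (x k)) (dotpC z (s k)); ring.
have [_ sub] := hs k.
have sg := sub z.
have E3 : dotp (s k) (z - x k) = - dotp (s k) (x k - z).
  dexp; ring.
rewrite E3 in sg.
have [tl1 tl2] := t_le k.
have T0 := t_ge0 k.
have e1 := epmu k; have e0 := ep0 k; have a0 := al0 k.
have H1 : t k * dotp (s k) (x k - z) >= t k * (f (x k) - f z - eps k).
  by apply: ler_wpM2l => //; lra.
have H2 : t k * eps k <= mu * alpha k ^+ 2.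
  have : t k * eps k <= alpha k * (mu * alpha k) by apply: ler_pM.
  rewrite expr2; lra.
have Mc0 := Mc_ge0.
have H3 : Mc gbar thbar lbar * (t k ^+ 2 * N (s k)) <= Mc gbar thbar lbar * alpha k ^+ 2.
  by apply: ler_wpM2l.
rewrite E1 E2 in S.
rewrite /Mf.
lra.
Qed.


Variable S2 : R.
Hypotheses (fcv : convex_fun f)
  (epdec : forall k, eps k <= eps 0%N)
  (Sinf : forall A N0, exists m, (N0 <= m)%N /\ A <= \sum_(N0 <= k < m) alpha k)
  (S2b : forall m1 m2, \sum_(m1 <= k < m2) alpha k ^+ 2 <= S2).

Lemma S2_ge0 : 0 <= S2.
Proof. by apply: le_trans (S2b 0 0); rewrite big_geq. Qed.

Lemma telescope z N0 (del : R) : C z -> 0 < del ->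
  (forall k, (N0 <= k)%N -> f z + del < f (x k)) ->
  forall i, N (x (N0 + i)%N - z) + 2 * del * \sum_(N0 <= k < N0 + i) t k
     <= N (x N0 - z) + Mf * \sum_(N0 <= k < N0 + i) alpha k ^+ 2.
Proof.
move=> Cz d0 hk; elim=> [|i IH].
  by rewrite addn0 !big_geq // !mulr0 !addr0.
rewrite addnS !big_nat_recr ?leq_addr //=.
have F := fejer z (N0 + i) Cz.
have h := hk (N0 + i)%N (leq_addr _ _).
have T0 := t_ge0 (N0 + i).
have : t (N0 + i)%N * (f z - f (x (N0 + i)%N)) <= - (t (N0 + i)%N * del).
  rewrite -mulrN; apply: ler_wpM2l => //; lra.
lra.
Qed.

Lemma coord_bound (u : vec) (D : R) : 0 <= D -> N u <= D ->
  forall i, `|u ord0 i| <= D + 1.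
Proof.
move=> D0 hu i; have := coord_le u i.
rewrite -real_normK ?num_real //.
have := normr_ge0 (u ord0 i); nra.
Qed.

Lemma freq z (del : R) N0 : C z -> 0 < del ->
  exists k, (N0 <= k)%N /\ f (x k) <= f z + del.
Proof.
move=> Cz d0; cph.
case: (pselect (exists k, (N0 <= k)%N /\ f (x k) <= f z + del)) => // hn.
exfalso.
have hk : forall k, (N0 <= k)%N -> f z + del < f (x k).
  move=> k hk; rewrite ltNge; apply/negP => hle; apply: hn; by exists k.
have TL := telescope z N0 del Cz d0 hk.
have Mf0 := Mf_ge0; have S20 := S2_ge0.
set D := N (x N0 - z) + Mf * S2.
have D0 : 0 <= D by rewrite /D; have := dotp_ge0 (x N0 - z); nra.
have hb : forall i, N (x (N0 + i)%N - z) <= D /\ 2 * del * \sum_(N0 <= k < N0 + i) t k <= D.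
  move=> i; have := TL i.
  have := S2b N0 (N0 + i); have := dotp_ge0 (x (N0 + i)%N - z).
  have : 0 <= \sum_(N0 <= k < N0 + i) t k by apply: sumr_ge0 => k _; exact: t_ge0.
  move=> h1 h2 h3 h4.
  have : Mf * \sum_(N0 <= k < N0 + i) alpha k ^+ 2 <= Mf * S2 by apply: ler_wpM2l.
  have := mulr_ge0 (ltW d0) h1.
  rewrite /D; nra.
have [B hB] := box_bound f z (D + 2) fcv (ltr_pwDr (ltr0n _ 2) D0).
set G := B - f z - del + eps 0%N.
set H := Num.max 1 G.
have H1 : 1 <= H by rewrite /H le_max lexx.
have hsb : forall k, (N0 <= k)%N -> alpha k <= H * t k.
  move=> k hkk.
  have [i ->] : exists i, k = (N0 + i)%N by exists (k - N0)%N; rewrite subnKC.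
  set k' := (N0 + i)%N.
  have [hd _] := hb i.
  set q := enorm (s k').
  have hm : Num.max 1 q <= H.
    rewrite ge_max H1 /=.
    case: (lerP q 1) => hq.
      by apply: le_trans H1.
    have q0 : 0 < q by lra.
    have Nq : N (s k') = q ^+ 2 by rewrite /q /enorm sqr_sqrtr // dotp_ge0.
    set y := x k' + q^-1 *: s k'.
    have hy : forall j, `|y ord0 j - z ord0 j| <= D + 2.
      move=> j; rewrite /y !mxE.
      have c1 := coord_bound (x k' - z) D D0 hd j; rewrite !mxE in c1.
      have c2 : `|q^-1 * s k' ord0 j| <= 1.
        rewrite normrM ger0_norm ?invr_ge0 ?(ltW q0) //.
        rewrite ler_pdivrMl // mulr1.
        have := coord_le (s k') j; rewrite Nq.
        rewrite -real_normK ?num_real //.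
        have := normr_ge0 (s k' ord0 j); nra.
      have := ler_normD (x k' ord0 j - z ord0 j) (q^-1 * s k' ord0 j).
      have -> : x k' ord0 j - z ord0 j + q^-1 * s k' ord0 j = x k' ord0 j + q^-1 * s k' ord0 j - z ord0 j by ring.
      lra.
    have fy := hB y hy.
    have [_ sub] := hs k'.
    have sg := sub y.
    have e : dotp (s k') (y - x k') = q.
      rewrite /y (_ : x k' + q^-1 *: s k' - x k' = q^-1 *: s k'); last first.
        by rewrite addrC addKr.
      rewrite dotpZr Nq; field; rewrite gt_eqF //.
    rewrite e in sg.
    have := hk k' (leq_addr _ _).
    have := epdec k'.
    move=> h1 h2.
    have qG : q <= G by rewrite /G; lra.
    apply: le_trans qG _; by rewrite /H le_max lexx orbT.
  rewrite (ht k').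
  have m1 : (1:R) <= Num.max 1 q by rewrite le_max lexx.
  have m0 : 0 < Num.max 1 q by lra.
  rewrite -/q mulrCA.
  rewrite -{1}[alpha k']mulr1; apply: ler_wpM2l; first exact: al0.
  by rewrite ler_pdivlMr // mul1r.
have [m [hm hA]] := Sinf (H * D / (2 * del) + 1) N0.
have [i ei] : exists i, m = (N0 + i)%N by exists (m - N0)%N; rewrite subnKC.
rewrite ei in hA.
have [_ hT] := hb i.
have hS : \sum_(N0 <= k < N0 + i) alpha k <= H * \sum_(N0 <= k < N0 + i) t k.
  rewrite mulr_sumr; apply: ler_sum_nat => k /andP [hk1 _]; exact: hsb.
have : H * \sum_(N0 <= k < N0 + i) t k <= H * D / (2 * del).
  rewrite -mulrA; apply: ler_wpM2l; first lra.
  rewrite ler_pdivlMr; last lra.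
  lra.
lra.
Qed.

Lemma quasi_fejer z K : C z -> (forall k, f z <= f (x k)) ->
  forall i, N (x (K + i)%N - z) <= N (x K - z) + Mf * \sum_(K <= k < K + i) alpha k ^+ 2.
Proof.
move=> Cz hz; elim=> [|i IH].
  by rewrite addn0 big_geq // mulr0 addr0.
rewrite addnS big_nat_recr ?leq_addr //=.
have F := fejer z (K + i) Cz.
have T0 := t_ge0 (K + i).
have : t (K + i)%N * (f z - f (x (K + i)%N)) <= 0.
  apply: mulr_ge0_le0 => //; have := hz (K + i)%N; lra.
lra.
Qed.

Lemma liminf_le z (J : nat) : C z -> forall e, 0 < e ->
  ((einfs (fun k => (f (x k))%:E) J) <= (f z + e)%:E)%E.
Proof.
move=> Cz e e0.
have [k [hk hf]] := freq z e J Cz e0.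
apply: le_trans (_ : (f (x k))%:E <= _)%E; last by rewrite lee_fin.
apply: ereal_inf_lbound; exists k => //.
Qed.

Hypotheses (Cc : closed C)
  (Stail : forall e, 0 < e -> exists K, forall a b, (K <= a)%N ->
      \sum_(a <= k < b) alpha k ^+ 2 <= e).

Lemma part1 : limn_einf (fun k => (f (x k))%:E) = opt_val f C.
Proof.
rewrite limn_einf_lim.
rewrite (cvg_lim _ (@cvg_einfs_sup R (fun k => (f (x k))%:E))) //.
apply/eqP; rewrite eq_le; apply/andP; split.
  apply/ereal_supP => _ [J _ <-].
  apply/ereal_infP => _ [z Cz <-].
  apply/lee_addgt0Pr => e e0.
  rewrite -EFinD; exact: liminf_le.
apply: (@le_trans _ _ (einfs (fun k => (f (x k))%:E) 0%N)).
  apply/ereal_infP => _ [k _ <-].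
  apply: ereal_inf_lbound; exists (x k) => //; exact: Cx.
by apply: ereal_sup_ubound; exists 0%N.
Qed.

Lemma ball_R (a b e : R) : ball a e b -> `|a - b| < e.
Proof. by rewrite -ball_normE /ball_ /=. Qed.

Lemma inv_small (e : R) : 0 < e -> exists J : nat, forall j, (J <= j)%N -> 1 / (j.+1)%:R < e.
Proof.
move=> e0.
have h := @archi_boundP R (1 / e) (ltW (divr_gt0 ltr01 e0)).
set J := Num.Def.archi_bound (1 / e) in h.
exists J => j hj.
have jJ : (J%:R : R) <= j%:R by rewrite ler_nat.
have j0 : (0 : R) < j.+1%:R by rewrite ltr0n.
rewrite ltr_pdivrMr // mulrC -ltr_pdivrMr //.
apply: lt_le_trans h _; rewrite -natr1; lra.
Qed.

Lemma part2 z0 : minimizers f C z0 ->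
  exists2 p, minimizers f C p & x @ \oo --> p.
Proof.
move=> [Cz0 hz0]; cph.
have hz0x : forall k, f z0 <= f (x k) by move=> k; exact: hz0 _ (Cx k).
have Mf0 := Mf_ge0; have S20 := S2_ge0.
have hfreq : forall j, exists k, (j <= k)%N /\ f (x k) <= f z0 + 1 / (j.+1)%:R.
  move=> j; apply: freq => //; apply: divr_gt0 => //; exact: ltr01.
have [ph hph] := choice hfreq.
set D := N (x 0%N - z0) + Mf * S2.
have D0 : 0 <= D by rewrite /D; have := dotp_ge0 (x 0%N - z0); nra.
have hbox : forall k, forall i, `|x k ord0 i - z0 ord0 i| <= D + 1.
  move=> k i.
  have QF := quasi_fejer z0 0 Cz0 hz0x k; rewrite add0n in QF.
  have : N (x k - z0) <= D.
    have := S2b 0 k; rewrite /D.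
    move=> h; have : Mf * \sum_(0 <= k0 < k) alpha k0 ^+ 2 <= Mf * S2 by apply: ler_wpM2l.
    lra.
  move=> hd; have := coord_bound (x k - z0) D D0 hd i; by rewrite !mxE.
set F := (fun j => x (ph j)) @ \oo.
have FA : F [set v : vec | forall i, `[z0 ord0 i - (D + 1), z0 ord0 i + (D + 1)]%classic (v ord0 i)].
  exists 0%N => // j _ i /=; rewrite in_itv /=.
  have := hbox (ph j) i; rewrite ler_norml => /andP [h1 h2].
  apply/andP; split; lra.
have [p [_ cp]] := @rV_compact _ _ _ (fun i => @segment_compact R _ _) F _ FA.
have clu : forall (A : set vec) (B : set vec), F A -> nbhs p B -> A `&` B !=set0.
  by move=> A B; apply: cp.
have Cp : C p.
  apply: Cc => B hB; have [v [Cv Bv]] := clu C B (ex_intro2 _ _ 0%N I (fun j _ => Cx (ph j))) hB.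
  by exists v.
have near_p : forall (tau : R) J, 0 < tau -> exists j, (J <= j)%N /\
    forall i, `|p ord0 i - x (ph j) ord0 i| < tau.
  move=> tau J t0.
  have FJ : F [set v | exists2 j, (J <= j)%N & v = x (ph j)].
    by exists J => // j /= hj; exists j.
  have [v [[j hj ->] hb]] := clu _ _ FJ (nbhsx_ballx p tau t0).
  exists j; split => // i.
  by case: hb => _ /(_ ord0 i) /ball_R.
have [Bp hBp] := box_bound f p 1 fcv ltr01.
have fp_tau : forall tau, 0 < tau -> tau < 1 -> f p <= tau * Bp + (1 - tau) * f z0.
  move=> tau t0 t1.
  apply/ler_addgt0Pr => e e0.
  have [J hJ] := inv_small e e0.
  have [j [hj hpx]] := near_p tau J t0.
  set xj := x (ph j).
  set y := p + ((1 - tau) / tau) *: (p - xj).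
  have hy : forall i, `|y ord0 i - p ord0 i| <= 1.
    move=> i; rewrite /y !mxE.
    have -> : p ord0 i + (1 - tau) / tau * (p ord0 i - xj ord0 i) - p ord0 i =
       (1 - tau) / tau * (p ord0 i - xj ord0 i) by ring.
    rewrite normrM ger0_norm; last by apply: divr_ge0; lra.
    have := hpx i; rewrite -/xj => h.
    have h2 : `|p ord0 i - xj ord0 i| / tau <= 1.
      by rewrite ler_pdivrMr // mul1r ltW.
    have -> : (1 - tau) / tau * `|p ord0 i - xj ord0 i| =
      (1 - tau) * (`|p ord0 i - xj ord0 i| / tau) by rewrite mulrAC mulrA.
    have : 0 <= 1 - tau by lra.
    have := divr_ge0 (normr_ge0 (p ord0 i - xj ord0 i)) (ltW t0).
    nra.
  have ep : p = tau *: y + (1 - tau) *: xj.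
    apply/rowP => i; rewrite /y !mxE; field; lra.
  have hc := fcv y xj tau (ltW t0) (ltW t1).
  rewrite -ep in hc.
  have fy := hBp y hy.
  have [_ fxj] := hph j.
  have hJj := hJ j hj.
  have q0 : (0:R) <= 1 / (j.+1)%:R by rewrite div1r invr_ge0 ler0n.
  move: fxj hJj q0; set q := 1 / (j.+1)%:R => fxj hJj q0.
  have : tau * f y <= tau * Bp by apply: ler_wpM2l; lra.
  have : (1 - tau) * f xj <= (1 - tau) * (f z0 + q).
    by apply: ler_wpM2l; [lra | exact: fxj].
  have : (1 - tau) * q <= q.
    have := mulr_ge0 (ltW t0) q0; lra.
  lra.
have fpz : f p <= f z0.
  apply/ler_addgt0Pr => e e0.
  set a := `|Bp - f z0| + 1.
  have a0 : 0 < a by rewrite /a; have := normr_ge0 (Bp - f z0); lra.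
  set tau := e / (e + a).
  have t0 : 0 < tau by apply: divr_gt0 => //; lra.
  have t1 : tau < 1 by rewrite /tau ltr_pdivrMr; lra.
  have := fp_tau tau t0 t1.
  have : tau * (Bp - f z0) <= tau * a.
    apply: ler_wpM2l; first lra.
    have := ler_norm (Bp - f z0); rewrite /a; lra.
  have : tau * a <= e.
    rewrite /tau mulrAC ler_pdivrMr; last lra.
    have := ltW e0; nra.
  lra.
have mp : minimizers f C p.
  split => // y Cy; apply: le_trans fpz (hz0 y Cy).
exists p => //.
have hpx : forall k, f p <= f (x k) by move=> k; apply: le_trans fpz (hz0x k).
apply/cvg_ballP => e e0.
set eta := e ^+ 2 / 4.
have eta0 : 0 < eta by apply: divr_gt0 => //; exact: exprn_gt0.
have [K hK] := Stail (eta / (Mf + 1)) (divr_gt0 eta0 (ltr_pwDr ltr01 Mf0)).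
set th0 := e / (2 * (n%:R + 1)).
have n0 : (0 : R) <= n%:R := ler0n _ _.
have th00 : 0 < th0 by apply: divr_gt0 => //; lra.
have [j [hj hpj]] := near_p th0 K th00.
have [hjk _] := hph j.
set k := ph j.
have dk : N (x k - p) <= eta.
  apply: le_trans (dotp_le_coord (x k - p) th0 _) _.
    by move=> i; rewrite !mxE distrC; apply: ltW.
  rewrite /eta /th0.
  have -> : n%:R * (e / (2 * (n%:R + 1))) ^+ 2 = e ^+ 2 / 4 * (n%:R / (n%:R + 1) ^+ 2).
    by field; lra.
  rewrite -[X in _ <= X]mulr1; apply: ler_wpM2l; first by apply: divr_ge0 => //; exact: sqr_ge0.
  rewrite ler_pdivrMr; last by apply: exprn_gt0; lra.
  nra.
exists k => // m /= hm.
have [i ->] : exists i, m = (k + i)%N by exists (m - k)%N; rewrite subnKC.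
have QF := quasi_fejer p k Cp hpx i.
have hs2 := hK k (k + i)%N (leq_trans hj hjk).
have : Mf * \sum_(k <= k0 < k + i) alpha k0 ^+ 2 <= eta.
  have : Mf * \sum_(k <= k0 < k + i) alpha k0 ^+ 2 <= Mf * (eta / (Mf + 1)).
    by apply: ler_wpM2l.
  have : Mf * (eta / (Mf + 1)) <= eta.
    rewrite mulrA ler_pdivrMr; last lra.
    nra.
  lra.
move=> hMf.
have hN : N (x (k + i)%N - p) <= e ^+ 2 / 2.
  have : eta + eta = e ^+ 2 / 2 by rewrite /eta; field.
  lra.
split => // i0 j0.
rewrite (ord1 i0).
rewrite -ball_normE /ball_ /=.
have := coord_le (x (k + i)%N - p) j0; rewrite !mxE.
rewrite -real_normK ?num_real // distrC.
move=> h.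
have e2 : e ^+ 2 / 2 < e ^+ 2 by rewrite ltr_pdivrMr // ; have := exprn_gt0 2 e0; lra.
have := normr_ge0 (x (k + i)%N ord0 j0 - p ord0 j0).
nra.
Qed.

End Iter.


Theorem mainTheorem5 (R : realType) (n : nat)
  (f : 'rV[R]_n -> R) (C : set 'rV[R]_n)
  (x s : nat -> 'rV[R]_n)
  (t eps alpha gam th lam : nat -> R)
  (phi : nat -> 'rV[R]_n -> 'rV[R]_n -> 'rV[R]_n -> R)
  (gbar thbar lbar mu : R) :
  (* problem data *)
  convex_fun f -> C !=set0 -> closed C -> cvx_set C ->
  (* standing assumptions on the tolerance parameters *)
  0 <= gbar -> 0 <= thbar -> thbar < 1/2 -> 0 <= lbar -> lbar < 1/2 ->
  (forall k, 0 <= gam k /\ gam k < gbar) ->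
  (forall k, 0 <= th k /\ th k < thbar) ->
  (forall k, 0 <= lam k /\ lam k < lbar) ->
  (forall k, rel_err_tol (gam k) (th k) (lam k) (phi k)) ->
  (* exogenous stepsize rule *)
  0 <= mu ->
  (forall k, 0 <= alpha k) -> (forall k, 0 <= eps k) ->
  (forall k, eps k.+1 <= eps k) ->
  (series alpha @ \oo --> +oo) ->
  cvg (series (fun k => alpha k ^+ 2) @ \oo) ->
  (forall k, eps k <= mu * alpha k) ->
  (forall k, t k = alpha k / Num.max 1 (enorm (s k))) ->
  (* the Subgradient-InexP iteration, which never stops *)
  C (x 0%N) ->
  (forall k, ~ (eps_subdiff f 0 (x k)) 0) ->
  (forall k, s k != 0 /\ eps_subdiff f (eps k) (x k) (s k)) ->
  (forall k, t k > 0) ->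
  (forall k, inexact_proj C (phi k) (x k) (x k - t k *: s k) (x k.+1)) ->
  limn_einf (fun k => (f (x k))%:E) = opt_val f C /\
  (minimizers f C !=set0 ->
     exists2 xs, minimizers f C xs & x @ \oo --> xs).
Proof.
move=> fcv _ Cc _ g0 tb0 tb lb0 lb hg hth hl hphi mu0 al0 ep0 epdec0 hser hcv
  epmu ht Cx0 _ hs _ hproj.
have epdec : forall k, eps k <= eps 0%N.
  by elim=> // k IH; exact: le_trans (epdec0 k) IH.
have Sinf : forall (A : R) N0, exists m, (N0 <= m)%N /\ A <= \sum_(N0 <= k < m) alpha k.
  move=> A N0.
  have /cvgryPge hA := hser.
  have [M _ hM] := hA (A + series alpha N0).
  exists (maxn M N0); split; first exact: leq_maxr.
  have := hM (maxn M N0) (leq_maxl _ _); rewrite /series /=.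
  rewrite (big_cat_nat (leq0n N0) (leq_maxr M N0)) /=.
  set a := \sum_(0 <= k < N0) alpha k; set b := \sum_(N0 <= k < _) alpha k.
  lra.
set u2 := series (fun k => alpha k ^+ 2).
set l := limn u2.
have hnd : {homo u2 : a b / (a <= b)%N >-> a <= b}.
  by apply: nondecreasing_series => k _ _; exact: sqr_ge0.
have hle : forall m, u2 m <= l by apply: nondecreasing_cvgn_le.
have l0 : 0 <= l by have := hle 0%N; rewrite /u2 /series /= big_geq.
have S2b : forall m1 m2, \sum_(m1 <= k < m2) alpha k ^+ 2 <= l.
  move=> m1 m2; case: (leqP m1 m2) => hm; last by rewrite big_geq // ltnW.
  have := hle m2; rewrite /u2 /series /= (big_cat_nat (leq0n m1) hm) /=.
  have : 0 <= \sum_(0 <= k < m1) alpha k ^+ 2 by apply: sumr_ge0 => k _; exact: sqr_ge0.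
  lra.
have hcv' : u2 @ \oo --> l := hcv.
have Stail : forall e, 0 < e -> exists K, forall a b, (K <= a)%N ->
    \sum_(a <= k < b) alpha k ^+ 2 <= e.
  move=> e e0.
  have hK0 := cvg_ball hcv' e0.
  have [K _ hK] := hK0.
  exists K => a b hKa.
  case: (leqP a b) => hab; last by rewrite big_geq ?(ltnW hab) // ltW.
  have hb := hle b.
  have ha : `|l - u2 a| < e := ball_R l (u2 a) e (hK a hKa).
  have ea : u2 b = u2 a + \sum_(a <= k < b) alpha k ^+ 2.
    by rewrite /u2 /series /= (big_cat_nat (leq0n a) hab).
  have := ler_norm (l - u2 a).
  move: ha hb ea; set q := \sum_(a <= k < b) alpha k ^+ 2.
  set ua := u2 a; set ub := u2 b.
  move=> *; lra.
split.
  exact: (@part1 R n f C x s t eps alpha gam th lam phi gbar thbar lbar mu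
    g0 tb0 tb lb0 lb hg hth hl hphi mu0 al0 ep0 epmu ht Cx0 hs hproj l
    fcv epdec Sinf S2b).
move=> [z0 hz0].
exact: (@part2 R n f C x s t eps alpha gam th lam phi gbar thbar lbar mu
    g0 tb0 tb lb0 lb hg hth hl hphi mu0 al0 ep0 epmu ht Cx0 hs hproj l
    fcv epdec Sinf S2b Cc Stail z0 hz0).
Qed.
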